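(* Define $h_n\in\,]0,\pi/4]$ by $\tan h_n=m_n$, and let $G(x)=\tfrac12\arctan(2\tan x)$ for $|x|<\pi/2$. Then $h_n=G^{\circ n}(\pi/4)$ for all $n\ge0$.
   Context: $(m_n)_{n\ge0}$ is the unique sequence of positive reals with $m_0=1$ and $(1+m_1+\cdots+m_n)m_n=1$ for $n\ge1$ (equivalently $m_{n+1}^2+m_{n+1}/m_n-1=0$). $G^{\circ n}$ denotes the $n$-fold composition, $G^{\circ0}=\mathrm{id}$. *)

(* Defs.v *)
From Stdlib Require Import Reals.
Open Scope R_scope.

(* The sequence (m_n): m_0 = 1, m_n > 0, and (1 + m_1 + ... + m_n) m_n = 1 for n >= 1.
   Note sum_f_R0 m n = m 0 + ... + m n = 1 + m 1 + ... + m n since m 0 = 1. *)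
Definition is_m_seq (m : nat -> R) : Prop :=
  m 0%nat = 1 /\ (forall n, 0 < m n) /\
  (forall n, (1 <= n)%nat -> sum_f_R0 m n * m n = 1).

Definition G (x : R) : R := / 2 * atan (2 * tan x).

Fixpoint iterR (n : nat) (f : R -> R) (x : R) : R :=
  match n with
  | O => x
  | S k => f (iterR k f x)
  end.

(* Main.v *)
Require Import Defs.
From Stdlib Require Import Reals Lra Lia.
Open Scope R_scope.

Lemma rec_m (m : nat -> R) : is_m_seq m ->
  forall n, (/ m n + m (S n)) * m (S n) = 1.
Proof.
  intros [H0 [Hp Hs]] n.
  assert (Sn : sum_f_R0 m n = / m n).
  { destruct n as [|k].
    - simpl. rewrite H0. field.
    - assert (E := Hs (S k) ltac:(lia)). pose proof (Hp (S k)).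
      apply (Rmult_eq_reg_r (m (S k))); [|lra].
      rewrite E. field. lra. }
  rewrite <- Sn. assert (E := Hs (S n) ltac:(lia)). simpl in E. exact E.
Qed.

Theorem proposition4p1 (m h : nat -> R) :
  is_m_seq m ->
  (forall n, 0 < h n <= PI / 4 /\ tan (h n) = m n) ->
  forall n : nat, h n = iterR n G (PI / 4).
Proof.
  intros Hm Hh n.
  pose proof PI_RGT_0 as Hpi.
  induction n as [|n IH].
  - simpl. destruct (Hh 0%nat) as [[a b] c].
    destruct Hm as [H0 _]. rewrite H0 in c.
    rewrite <- atan_1, <- c, atan_tan; lra.
  - simpl. rewrite <- IH. unfold G.
    destruct (Hh n) as [[a b] c]. destruct (Hh (S n)) as [[a' b'] c'].
    pose proof (rec_m m Hm n) as R.
    destruct Hm as [_ [Hp _]]. pose proof (Hp n). pose proof (Hp (S n)).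
    assert (Hlt : m (S n) < 1).
    { assert (0 < / m n) by (apply Rinv_0_lt_compat; lra). nra. }
    assert (h (S n) < PI / 4).
    { destruct (Rle_lt_or_eq_dec _ _ b') as [x|x]; auto.
      rewrite x, tan_PI4 in c'. lra. }
    assert (T : tan (2 * h (S n)) = 2 * tan (h n)).
    { rewrite tan_2a.
      - rewrite c, c'. 
        assert (E : m n = m (S n) / (1 - m (S n) * m (S n))).
        { assert (D : 1 - m (S n) * m (S n) = m (S n) * / m n).
          { rewrite <- R. ring. }
          rewrite D. field. lra. }
        rewrite E. field. nra.
      - apply Rgt_not_eq, cos_gt_0; lra.
      - apply Rgt_not_eq, cos_gt_0; lra.
      - rewrite c'. nra. }
    rewrite <- T, atan_tan; lra.
Qed.
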